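(* The Shapley cost sharing mechanism is REP-expanded.
   Context: GND instance: finite resource set $E$; players $i \in [N]$ with strategy collections $P_i \subseteq 2^E$ and weight vectors $w_i \in \mathbb{Z}_{\geq 1}^E$; constants $q\in\mathbb{Z}_{\ge1}$, $\alpha_1,\dots,\alpha_q > 1$; for each $e$, $\sigma_e \geq 0$, $\xi_{e,j} \geq 0$ (at least one positive), and $F_e(0)=0$, $F_e(l)=\sigma_e+\sum_j \xi_{e,j} l^{\alpha_j}$ for $l>0$. Profile $p=(p_1,\dots,p_N)$, $p_i\in P_i$; load $l_e^p=\sum_{i: e\in p_i} w_i(e)$; $S_e=\{i: e\in p_i\}$. Shapley cost sharing: for $e\in p_i$, $f_{i,e}(p)=\mathbb{E}\big[F_e\big(\sum_{i'\in S_e^i(\pi_e)}w_{i'}(e)+w_i(e)\big)-F_e\big(\sum_{i'\in S_e^i(\pi_e)}w_{i'}(e)\big)\big]$, where $\pi_e$ is a uniformly random permutation of $S_e$ and $S_e^i(\pi_e)$ is the set of players preceding $i$ in $\pi_e$; $f_{i,e}(p)=0$ if $e\notin p_i$. A cost sharing mechanism $M=\{f_{i,e}\}$ is REP-expanded if for each $j\in[q]$ there are a nonnegative integer $K_j$ and nonnegative constants $x_{k,j}\in[0,\alpha_j-1]$, $y_{k,j}\in[1,\alpha_j]$, $z_{k,j}$ ($k\in[K_j]$), depending only on $\alpha_j$, with $x_{k,j}+y_{k,j}=\alpha_j$, such that for every profile $p$, player $i$ and resource $e\in p_i$: $$f_{i,e}(p)\le \sigma_e+\sum_{j\in[q]}\xi_{e,j}\sum_{k=1}^{K_j}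 z_{k,j}\,(l_e^p-w_i(e))^{x_{k,j}}(w_i(e))^{y_{k,j}}.$$ *)

(* Defs.v *)
From HB Require Import structures.
From mathcomp Require Import all_boot all_order all_algebra.
From mathcomp Require Import reals exp.
Set Implicit Arguments. Unset Strict Implicit. Unset Printing Implicit Defensive.
Import Order.TTheory GRing.Theory Num.Theory.
Local Open Scope ring_scope.

Section GND.
Variables (R : realType) (E : finType) (N : nat).

Definition users (p : 'I_N -> {set E}) (e : E) : {set 'I_N} :=
  [set i | e \in p i].

Definition load (p : 'I_N -> {set E}) (w : 'I_N -> E -> nat) (e : E) : nat :=
  (\sum_(i < N | e \in p i) w i e)%N.

Definition Fcost (q : nat) (alpha : 'I_q -> R) (sigma : E -> R)
  (xi : E -> 'I_q -> R) (e : E) (l : nat) : R :=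
  if l == 0%N then 0 else sigma e + \sum_(j < q) xi e j * (l%:R `^ alpha j).

(* Shapley cost share: expectation over a uniformly random ordering s of S_e
   (a permutation of the sequence enum S_e); the predecessors of i in s
   are take (index i s) s. *)
Definition shapley (q : nat) (alpha : 'I_q -> R) (sigma : E -> R)
  (xi : E -> 'I_q -> R) (w : 'I_N -> E -> nat) (p : 'I_N -> {set E})
  (i : 'I_N) (e : E) : R :=
  if e \in p i then
    let orders := permutations (enum (users p e)) in
    (\sum_(s <- orders)
       let pre := (\sum_(i' <- take (index i s) s) w i' e)%N in
       (Fcost alpha sigma xi e (pre + w i e) - Fcost alpha sigma xi e pre))
    / (size orders)%:R
  else 0.

End GND.

(* Main.v *)
From HB Require Import structures.
From mathcomp Require Import all_boot all_order all_algebra.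
From mathcomp Require Import reals exp.
From mathcomp Require Import ring lra.
Require Import Defs.
Import Order.TTheory GRing.Theory Num.Theory.
Local Open Scope ring_scope.

Section K.
Variable R : realType.

Lemma nat_pow_bound (t : R) n : 0 <= t <= 1 -> (1+t)^+n <= 1 + (2^+n - 1) * t.
Proof.
move=> /andP[t0 t1]; elim: n => [|n IH]; first by rewrite !expr0 subrr mul0r addr0.
have c0 : 1 <= (2:R)^+n by apply: exprn_ege1; lra.
rewrite exprS mulrC exprS.
have h1 : 0 <= 1 + t by lra.
apply: (le_trans (ler_wpM2r h1 IH)).
set c := 2^+n - 1 : R. have -> : 2 * 2^+n - 1 = 2*c + 1 :> R by rewrite /c; ring.
have c0' : 0 <= c by rewrite /c; lra.
have : 0 <= c * t * (1 - t) by apply: mulr_ge0; [apply: mulr_ge0|lra].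
nra.
Qed.

Definition Cst (a : R) : R := 2 ^+ (Num.truncn a).+1.

Lemma key (a u v : R) : 1 < a -> 0 <= u -> 0 < v ->
  (u+v) `^ a <= u `^ a + Cst a * (u `^ (a-1) * v + v `^ a).
Proof.
move=> a1 u0 v0.
have m_ge : a <= ((Num.truncn a).+1)%:R by apply/ltW; exact: truncnS_gt.
have Cge : 2 `^ a <= Cst a.
  by rewrite /Cst -powR_mulrn //; apply: ler_powR => //; lra.
have Cge1 : 0 <= Cst a by rewrite /Cst exprn_ge0.
have pu := powR_ge0 u a.
have pu1 := powR_ge0 u (a-1).
have pv := powR_ge0 v a.
case: (leP u v) => uv.
- have : (u+v) `^ a <= (2*v) `^ a.
    apply: ge0_ler_powR; rewrite ?nnegrE; lra.
  rewrite powRM; [|lra|lra] => h.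
  have : 2 `^ a * v `^ a <= Cst a * v `^ a by apply: ler_wpM2r.
  have : 0 <= Cst a * (u `^ (a - 1) * v) by apply: mulr_ge0 => //; apply: mulr_ge0 => //; lra.
  lra.
- have u0' : 0 < u by lra.
  set t := v / u.
  have t0 : 0 <= t <= 1.
    apply/andP; split; first by rewrite /t divr_ge0 //; lra.
    by rewrite /t ler_pdivrMr // mul1r; lra.
  have e : u + v = u * (1 + t) by rewrite /t mulrDr mulr1 mulrCA divff ?mulr1 // gt_eqF.
  rewrite e powRM; [|lra|lra].
  have h1 : (1+t) `^ a <= (1+t) `^ ((Num.truncn a).+1)%:R by apply: ler_powR; lra.
  rewrite powR_mulrn in h1; last lra.
  have h2 := @nat_pow_bound t (Num.truncn a).+1 t0.
  have h3 : u `^ a * (1 + t) `^ a <= u `^ a * (1 + (Cst a - 1) * t).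
    by apply: ler_wpM2l => //; apply: (le_trans h1); rewrite /Cst.
  have e2 : u `^ a * t = u `^ (a-1) * v.
    rewrite /t -(mulr_powRB1 (ltW u0') (_ : 0 < a)); last lra.
    by field; rewrite gt_eqF.
  have : 0 <= u `^ a * t by rewrite e2; apply: mulr_ge0 => //; lra.
  move: h3; rewrite mulrDr mulr1 mulrCA e2 => h3 h4.
  have : 0 <= Cst a * v `^ a by apply: mulr_ge0.
  nra.
Qed.

Definition xf (a : R) (k : nat) : R := if k == 0%N then a - 1 else 0.
Definition yf (a : R) (k : nat) : R := if k == 0%N then 1 else a.

Lemma term (a : R) (n w L : nat) : 1 < a -> (1 <= w)%N -> (n + w <= L)%N ->
  (n + w)%:R `^ a - n%:R `^ a <=
  \sum_(k < 2) Cst a * ((L%:R - w%:R) `^ xf a k) * (w%:R `^ yf a k).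
Proof.
move=> a1 w1 nwL.
rewrite big_ord_recr big_ord_recr big_ord0 /= add0r /xf /yf /=.
rewrite powRr0 mulr1 powRr1 ?ler0n //.
have v0 : 0 < (w%:R : R) by rewrite ltr0n.
have := @key a n%:R w%:R a1 (ler0n R n) v0; rewrite natrD => k.
have hn : (n%:R : R) <= L%:R - w%:R.
  by rewrite lerBrDr -natrD ler_nat.
have hp : n%:R `^ (a - 1) <= (L%:R - w%:R) `^ (a - 1) :> R.
  apply: ge0_ler_powR => //; rewrite ?nnegrE ?ler0n //; [lra|].
  by apply: le_trans hn.
have Cge1 : 0 <= Cst a by rewrite /Cst exprn_ge0.
have : Cst a * (n%:R `^ (a - 1) * w%:R) <= Cst a * ((L%:R - w%:R) `^ (a - 1) * w%:R).
  by apply: ler_wpM2l => //; apply: ler_wpM2r => //; apply: ltW.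
lra.
Qed.
End K.

Theorem lemma6p3 (R : realType) :
  exists (K : R -> nat) (x y z : R -> nat -> R),
    (forall a : R, 1 < a -> forall k : nat, (k < K a)%N ->
       [/\ 0 <= x a k <= a - 1, 1 <= y a k <= a, x a k + y a k = a
         & 0 <= z a k]) /\
    (forall (E : finType) (N : nat) (P : 'I_N -> {set {set E}})
            (w : 'I_N -> E -> nat) (q : nat) (alpha : 'I_q -> R)
            (sigma : E -> R) (xi : E -> 'I_q -> R),
       (0 < q)%N ->
       (forall j, 1 < alpha j) ->
       (forall i e, (1 <= w i e)%N) ->
       (forall e, 0 <= sigma e) ->
       (forall e j, 0 <= xi e j) ->
       (forall e, exists j, 0 < xi e j) ->
       forall p : 'I_N -> {set E}, (forall i, p i \in P i) ->
       forall (i : 'I_N) (e : E), e \in p i ->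
         shapley alpha sigma xi w p i e <=
         sigma e + \sum_(j < q) xi e j *
           \sum_(k < K (alpha j))
             z (alpha j) k
             * (((load p w e)%:R - (w i e)%:R) `^ x (alpha j) k)
             * ((w i e)%:R `^ y (alpha j) k)).
Proof.
exists (fun _ => 2%N), (@xf R), (@yf R), (fun a _ => @Cst R a); split.
  move=> a a1 [|[|k]] // _; rewrite /xf /yf /=; split; rewrite ?exprn_ge0 //;
    try (apply/andP; split); lra.
move=> E N P w q alpha sigma xi q0 a1 w1 s0 xi0 _ p _ i e ein.
rewrite /shapley ein /=.
set orders := permutations _.
set B := (X in _ <= X).
have iu : i \in enum (users p e) by rewrite mem_enum inE.
have szpos : (0 < size orders)%N.
  have : enum (users p e) \in orders by rewrite mem_permutations.
  by case: (orders).
have szR : (0 : R) < (size orders)%:R by rewrite ltr0n.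
rewrite ler_pdivrMr //.
have -> : B * (size orders)%:R = \sum_(s <- orders) B.
  by rewrite big_const_seq count_predT iter_addr_0 mulr_natr.
rewrite big_seq [X in _ <= X]big_seq; apply: ler_sum => s.
rewrite mem_permutations => hs.
have is_ : i \in s by rewrite (perm_mem hs).
set pre := (\sum_(i' <- take (index i s) s) w i' e)%N.
have hload : (pre + w i e <= load p w e)%N.
  have -> : load p w e = (\sum_(i' <- s) w i' e)%N.
    rewrite (perm_big _ hs) big_enum /load.
    by apply: eq_bigl => j; rewrite inE.
  rewrite -[in X in (_ <= X)%N](cat_take_drop (index i s) s) big_cat /= (drop_nth i);
    last by rewrite index_mem.
  by rewrite nth_index // big_cons addnA leq_addr.
apply: le_trans (_ : sigma e + \sum_(j < q) xi e j *
   ((pre + w i e)%:R `^ alpha j - pre%:R `^ alpha j) <= _).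
  rewrite /Fcost.
  have -> : (pre + w i e == 0)%N = false.
    by apply/negbTE; rewrite addn_eq0 (negbTE (lt0n_neq0 (w1 i e))) andbF.
  case: eqP => [->|_].
    rewrite subr0; apply: lerD => //; apply: ler_sum => j _.
    by rewrite add0n powR0 ?subr0 //; have := a1 j; lra.
  rewrite [X in _ <= _ + X](_ : \sum_(j < q) _ = \sum_(j < q) xi e j * (pre + w i e)%:R `^ alpha j
     - \sum_(j < q) xi e j * pre%:R `^ alpha j); last first.
    by rewrite -sumrB; apply: eq_bigr => j _; rewrite mulrBr.
  have := s0 e; lra.
rewrite /B; apply: lerD => //; apply: ler_sum => j _.
apply: ler_wpM2l => //.
exact: term.
Qed.
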